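(* Consider the uniform Qs predictor with queue capacity $a:=\mathrm{qcap}$, an integer $a\ge2$, processing an arbitrary sequence of items. For items $i$ whose queue has exactly $a$ cells, the estimate is $Q(i)=(a-1)/Y_i$ with $Y_i:=\sum_{0\le j<|q(i)|}c_j-1$, and $Q(i)=0$ for all other items. Then at every time $t\ge1$ and for every integer $k>1$, $N(Q^{(t)},1/k)\le k-1$, where $N(Q,p):=|\{i:Q(i)>p\}|$.
   Context: The Qs predictor keeps a map from items to queues of positive integer counts (''cells''), the newest cell being $c_0$, older ones $c_1,c_2,\dots$; each queue holds at most $\mathrm{qcap}$ cells. At each time $t$ it outputs estimates $Q^{(t)}$, then observes $o^{(t)}$ and updates: if $o^{(t)}$ has no queue, an empty queue is created; the queue of $o^{(t)}$ gets a positive update (its size grows by one if below capacity; all existing cells shift one position older, the oldest being discarded if at capacity; a new cell $c_0=1$ is created), and every other existing queue gets a negative update ($c_0$ incremented by $1$). Items may occasionally be removed from the map (pruning). The ''uniform'' variant outputs a positive estimate for an item only once its queue has reached capacity $\mathrm{qcap}$. *)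

(* Defs.v *)
From mathcomp Require Import all_boot all_algebra finmap.
Set Implicit Arguments. Unset Strict Implicit. Unset Printing Implicit Defensive.
Import GRing.Theory Num.Theory.

Local Open Scope fset_scope.
Local Open Scope fmap_scope.

(** A queue is a list of positive counts, newest cell c_0 first. *)
Definition queue := seq nat.

Definition qs_state (T : choiceType) := {fmap T -> queue}.

(** Positive update with capacity [qcap]: all cells shift one older (the
    oldest discarded if the queue is at capacity) and a new cell c_0 = 1
    is created. *)
Definition pos_update (qcap : nat) (q : queue) : queue := take qcap (1 :: q).

Definition neg_update (q : queue) : queue :=
  if q is c :: r then c.+1 :: r else [::].

Definition observe (T : choiceType) (qcap : nat) (m : qs_state T) (o : T)
  : qs_state T :=
  [fmap x : domf m => neg_update (m x)].[o <- pos_update qcap (odflt [::] m.[? o])].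

Inductive event (T : Type) := Obs of T | Prune of T.

Definition step (T : choiceType) (qcap : nat) (m : qs_state T) (e : event T)
  : qs_state T :=
  match e with
  | Obs o => observe qcap m o
  | Prune i => m.[~ i]
  end.

Definition run (T : choiceType) (qcap : nat) (evs : seq (event T)) : qs_state T :=
  foldl (step qcap) [fmap] evs.

Definition Qest (T : choiceType) (qcap : nat) (m : qs_state T) (i : T) : rat :=
  match m.[? i] with
  | Some q => if size q == qcap
              then ((qcap%:R - 1) / ((sumn q)%:R - 1))%R
              else 0%R
  | None => 0%R
  end.

(** N(Q,p) = #{ i : Q(i) > p }.  Items outside the map have estimate 0, so
    for p >= 0 it suffices to count over the domain of the map. *)
Definition Ncount (T : choiceType) (qcap : nat) (m : qs_state T) (p : rat) : nat :=
  #|` [fset i in domf m | (p < Qest qcap m i)%R] |.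

(* Main.v *)
Require Import Defs.
From mathcomp Require Import all_boot all_algebra finmap.
Import order.Order.TTheory GRing.Theory Num.Theory.
From mathcomp Require Import zify.

Section Helpers.
Local Open Scope fmap_scope.

Lemma fnd_map (T:choiceType) (V : Type) (f : V -> V) (m : {fmap T -> V}) i :
  [fmap x : domf m => f (m x)].[? i] = omap f m.[? i].
Proof.
case: fndP => [kf|kNf] /=.
  by rewrite ffunE in_fnd.
by rewrite not_fnd.
Qed.

Fixpoint psums (s : nat) (q : seq nat) : seq nat :=
  if q is c :: r then (s + c) :: psums (s + c) r else [::].

Lemma psums_shift s q : psums s.+1 q = map succn (psums s q).
Proof. by elim: q s => [|c r IH] s //=; rewrite addSn IH. Qed.

Lemma psums_neg q : psums 0 (neg_update q) = map succn (psums 0 q).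
Proof. by case: q => [|c r] //=; rewrite !add0n psums_shift. Qed.

Lemma psums_take n s q : psums s (take n q) = take n (psums s q).
Proof. by elim: q n s => [|c r IH] [|n] s //=; rewrite IH. Qed.

Lemma psums_pos a q :
  psums 0 (pos_update a q) = take a (1 :: map succn (psums 0 q)).
Proof. by rewrite /pos_update psums_take /= psums_shift. Qed.

Lemma psums_le s q x : x \in psums s q -> (x <= s + sumn q)%N.
Proof.
elim: q s => [|c r IH] s //=; rewrite inE => /orP [/eqP -> | /IH].
  by rewrite addnA leq_addr.
by rewrite addnA.
Qed.

Lemma size_psums s q : size (psums s q) = size q.
Proof. by elim: q s => [|c r IH] s //=; rewrite IH. Qed.

Definition P {T : choiceType} (m : qs_state T) i := psums 0 (odflt [::] m.[? i]).

Definition Inv {T : choiceType} (m : qs_state T) :=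
  [/\ (forall i x, x \in P m i -> 0 < x)%N,
      (forall i, uniq (P m i)) &
      (forall i j x, x \in P m i -> x \in P m j -> i = j)].

Lemma P_obs (T : choiceType) a (m : qs_state T) o i :
  P (observe a m o) i =
  if i == o then take a (1 :: map succn (P m o)) else map succn (P m i).
Proof.
rewrite /P /observe fnd_set; case: eqP => _ /=; first by rewrite psums_pos.
by rewrite fnd_map; case: (m.[? i]) => [q|] //=; rewrite psums_neg.
Qed.

Lemma P_prune (T : choiceType) (m : qs_state T) p i :
  P m.[~ p] i = if i == p then [::] else P m i.
Proof. by rewrite /P fnd_rem1; case: eqP. Qed.

Lemma Inv_step (T : choiceType) a (m : qs_state T) e : Inv m -> Inv (step a m e).
Proof.
case=> Hpos Huq Hdj; case: e => [o|p] /=.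
- have H0 : forall i, 0 \notin P m i.
    by move=> i; apply/negP => /Hpos.
  have memS : forall i x, x \in map succn (P m i) -> exists2 y, y \in P m i & x = y.+1.
    by move=> i x /mapP.
  have memT : forall x, x \in take a (1 :: map succn (P m o)) ->
      x = 1 \/ exists2 y, y \in P m o & x = y.+1.
    move=> x /mem_take; rewrite inE => /orP [/eqP ->|/memS]; [by left| by right].
  split.
  + move=> i x; rewrite P_obs; case: eqP => _.
      by case/memT => [->|[y _ ->]].
    by case/memS => y _ ->.
  + move=> i; rewrite P_obs; case: eqP => _.
      apply: take_uniq => /=; rewrite (map_inj_uniq succn_inj) Huq andbT.
      by apply/negP => /memS [y Hy []] Hy0; move: Hy; rewrite -Hy0 (negPf (H0 o)).
    by rewrite (map_inj_uniq succn_inj).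
  + move=> i j x; rewrite !P_obs.
    case: (eqVneq i o) => [->|Hio]; case: (eqVneq j o) => [->|Hjo] //.
    * case/memT => [->|[y Hy ->]] /memS [z Hz].
        by case=> Hz0; move: Hz; rewrite -Hz0 (negPf (H0 j)).
      by case=> Hyz; rewrite -Hyz in Hz; apply: Hdj Hy Hz.
    * move=> /memS [z Hz] ->; case/memT => [[Hz0]|[y Hy []] Hyz].
        by move: Hz; rewrite Hz0 (negPf (H0 i)).
      by rewrite -Hyz in Hy; apply: Hdj Hz Hy.
    * move=> /memS [z Hz] -> /memS [y Hy []] Hyz.
      by rewrite -Hyz in Hy; apply: Hdj Hz Hy.
- split.
  + by move=> i x; rewrite P_prune; case: eqP => _ //; apply: Hpos.
  + by move=> i; rewrite P_prune; case: eqP => _ //; apply: Huq.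
  + move=> i j x; rewrite !P_prune; case: eqP => _ //; case: eqP => _ //.
    exact: Hdj.
Qed.

Lemma Inv_run (T : choiceType) a evs : Inv (run a evs : qs_state T).
Proof.
rewrite /run; have : Inv ([fmap] : qs_state T).
  by split => [i x|i|i j x]; rewrite /P fnd_fmap0.
elim: evs [fmap] => [|e evs IH] m Hm //=.
by apply: IH; apply: Inv_step.
Qed.

Lemma flatten_uniq (T : choiceType) (m : qs_state T) (s : seq T) :
  Inv m -> uniq s -> uniq (flatten [seq P m i | i <- s]).
Proof.
case=> _ Huq Hdj; elim: s => [|x s IH] //= /andP [xs us].
rewrite cat_uniq Huq IH // andbT.
apply/hasPn => y /flattenP [l /mapP [z zs ->]] yz; apply/negP => yx.
by have Exz := Hdj _ _ _ yx yz; rewrite Exz zs in xs.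
Qed.

End Helpers.

Theorem lemma14 (T : choiceType) (a : nat) (evs : seq (event T)) (k : nat) :
  (2 <= a)%N -> (1 < k)%N ->
  (Ncount a (run a evs) (1 / k%:R)%R%R <= k - 1)%N.
Proof.
move=> Ha Hk.
set m := run a evs.
have HI : Inv m by apply: Inv_run.
set F := [fset i in domf m | (1 / k%:R < Qest a m i)%R]%fset.
have Hmem : forall i, i \in F ->
    size (P m i) = a /\ (forall x, x \in P m i -> 0 < x <= k * (a - 1))%N.
  move=> i; rewrite !inE => /andP [_]; rewrite /Qest /P.
  case Eq: (m.[? i])%fmap => [q|] /=; last first.
    by rewrite ltNge divr_ge0 ?ler0n.
  case: eqP => Hsz; last by rewrite ltNge divr_ge0 ?ler0n.
  move=> Hlt; rewrite size_psums Hsz; split => // x Hx.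
  case: HI => Hpos _ _; have Hx0 : (0 < x)%N by apply: (Hpos i); rewrite /P Eq.
  rewrite Hx0 /=.
  have Hle := psums_le _ _ _ Hx; rewrite add0n in Hle.
  apply: leq_trans Hle _.
  have H1k : (0 <= 1 / k%:R :> rat)%R by rewrite divr_ge0 ?ler0n.
  move: Hlt; case Es: (sumn q) => [|[|n]].
  - rewrite sub0r invrN1 mulrN1 ltNge => /negP; case.
    apply: le_trans H1k; rewrite oppr_le0 subr_ge0 ler1n; exact: ltnW.
  - by rewrite subrr invr0 mulr0 ltNge H1k.
  - rewrite -[n.+2]addn1 natrD addrK -(natrB _ (ltnW Ha)).
    rewrite ltr_pdivlMr ?ltr0Sn // mul1r mulrC ltr_pdivrMr ?ltr0n ?(ltnW Hk) //.
    by rewrite -natrM ltr_nat mulnC addn1.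
set L := flatten [seq P m i | i <- enum_fset F].
have uL : uniq L by apply: flatten_uniq => //; apply: fset_uniq.
have sL : size L = (#|` F| * a)%N.
  rewrite /L.
  have : forall i, i \in enum_fset F -> size (P m i) = a by move=> i /Hmem [].
  elim: (enum_fset F) => [|x s IH] //= Hs.
  rewrite size_cat IH; last by move=> y ys; apply: Hs; rewrite inE ys orbT.
  by rewrite Hs ?inE ?eqxx // mulSn.
have subL : {subset L <= iota 1 (k * (a - 1))}.
  move=> x /flattenP [l /mapP [i iF ->]] xi.
  have [_ /(_ x xi) /andP [x0 xk]] := Hmem i iF.
  by rewrite mem_iota x0 add1n ltnS.
have := uniq_leq_size uL subL; rewrite size_iota sL.
rewrite /Ncount -/m -/F.
move=> H; nia.
Qed.
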